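(* Let $K$ be a field, $S=K[x_1,\dots,x_n]$, $A\subseteq\{1,\dots,n\}$ and $f=\prod_{j\in A}x_j$. Then $\operatorname{sdepth}(S_f)=n$.
   Context: $S_f=K[x_1,\dots,x_n,x_j^{-1}:j\in A]$, with $K$-basis the monomials $x_1^{a_1}\cdots x_n^{a_n}$, $a_j\in\mathbb Z$ for $j\in A$, $a_j\in\mathbb N$ otherwise. A Stanley space of $S_f$ is $uK[Z]$, the $K$-span of all $uw$ ($w$ a monomial in the elements of $Z$), where $u$ is a monomial, $Z\subseteq\{x_1,\dots,x_n\}\cup\{x_j^{-1}:j\in A\}$ with $\{x_j,x_j^{-1}\}\not\subseteq Z$ for all $j\in A$, and $uK[Z]$ is a free $K[Z]$-module; its dimension is $|Z|$. A Stanley decomposition $\mathcal D$ is a finite direct sum of Stanley spaces equal to $S_f$; $\operatorname{sdepth}\mathcal D$ is the minimal dimension of its spaces and $\operatorname{sdepth}(S_f)$ the maximum of $\operatorname{sdepth}\mathcal D$ over all Stanley decompositions. *)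

(* Defs.v *)
From mathcomp Require Import all_boot all_order all_algebra.
Set Implicit Arguments. Unset Strict Implicit. Unset Printing Implicit Defensive.
Import Order.TTheory GRing.Theory Num.Theory.
Local Open Scope ring_scope.

(* Exponent vectors of Laurent monomials x_1^{a_1}...x_n^{a_n}, a_j : int.
   Variables are indexed by 'I_n (x_1..x_n correspond to 0..n-1). *)
Definition expo (n : nat) := {ffun 'I_n -> int}.

(* Generators: (j, true) stands for x_j, (j, false) stands for x_j^{-1}. *)
Definition gen (n : nat) := ('I_n * bool)%type.

Definition is_monomial_Sf n (A : {set 'I_n}) (a : expo n) : Prop :=
  forall j, j \notin A -> 0 <= a j.

(* Elements of the K-vector space with basis the Laurent monomials:
   finitely supported coefficient functions. *)
Definition fin_supp (K : fieldType) n (p : expo n -> K) : Prop :=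
  exists s : seq (expo n), forall a, p a != 0 -> a \in s.

(* p lies in S_f = K[x_1,...,x_n, x_j^{-1} : j in A] *)
Definition in_Sf (K : fieldType) n (A : {set 'I_n}) (p : expo n -> K) : Prop :=
  fin_supp p /\ forall a, p a != 0 -> is_monomial_Sf A a.

Record stanley_space (n : nat) := SSpace { ss_u : expo n; ss_Z : {set gen n} }.

(* exponent of u * w where w = prod_{z} z^{c z} *)
Definition exp_of n (u : expo n) (c : gen n -> nat) : expo n :=
  [ffun j => u j + (c (j, true))%:Z - (c (j, false))%:Z].

Definition supported_in n (Z : {set gen n}) (c : gen n -> nat) : Prop :=
  forall z, z \notin Z -> c z = 0%N.

Definition in_monset n (S : stanley_space n) (a : expo n) : Prop :=
  exists c : gen n -> nat, supported_in (ss_Z S) c /\ a = exp_of (ss_u S) c.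

Definition in_span (K : fieldType) n (S : stanley_space n) (p : expo n -> K) : Prop :=
  fin_supp p /\ forall a, p a != 0 -> in_monset S a.

(* u K[Z] is an admissible Stanley space of S_f: u a monomial of S_f,
   Z subset of {x_1..x_n} u {x_j^{-1} : j in A}, never both x_j and x_j^{-1},
   and u K[Z] free over K[Z] (distinct monomials w of K[Z] give distinct u w). *)
Definition valid_space n (A : {set 'I_n}) (S : stanley_space n) : Prop :=
  [/\ is_monomial_Sf A (ss_u S),
      (forall j, (j, false) \in ss_Z S -> j \in A),
      (forall j, ~ ((j, true) \in ss_Z S /\ (j, false) \in ss_Z S)) &
      (forall c1 c2, supported_in (ss_Z S) c1 -> supported_in (ss_Z S) c2 ->
         exp_of (ss_u S) c1 = exp_of (ss_u S) c2 -> forall z, c1 z = c2 z)].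

Definition dflt_space n : stanley_space n := SSpace [ffun=> 0] set0.
Definition dspace n (D : seq (stanley_space n)) (i : 'I_(size D)) :=
  nth (@dflt_space n) D i.

Definition stanley_decomp (K : fieldType) n (A : {set 'I_n})
    (D : seq (stanley_space n)) : Prop :=
  [/\ (forall i : 'I_(size D), valid_space A (dspace i)),
      (forall (i : 'I_(size D)) (q : expo n -> K),
          in_span (dspace i) q -> in_Sf A q),
      (forall p : expo n -> K, in_Sf A p ->
         exists g : 'I_(size D) -> expo n -> K,
           (forall i, in_span (dspace i) (g i)) /\
           forall a, p a = \sum_(i < size D) g i a) &
      (forall g : 'I_(size D) -> expo n -> K,
         (forall i, in_span (dspace i) (g i)) ->
         (forall a, \sum_(i < size D) g i a = 0) ->
         forall i a, g i a = 0)].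

Definition sdepth_decomp n (D : seq (stanley_space n)) : nat :=
  \big[minn/n]_(S <- D) #|ss_Z S|.

Definition sdepth_Sf_is (K : fieldType) n (A : {set 'I_n}) (d : nat) : Prop :=
  (exists D, stanley_decomp K A D /\ sdepth_decomp D = d) /\
  (forall D, stanley_decomp K A D -> (sdepth_decomp D <= d)%N).

(* Main.v *)
Require Import Defs.
From mathcomp Require Import all_boot all_order all_algebra.
From mathcomp Require Import zify.
Set Implicit Arguments. Unset Strict Implicit. Unset Printing Implicit Defensive.
Import Order.TTheory GRing.Theory Num.Theory.

Section S.
Variable n : nat.
Local Open Scope ring_scope.

Definition uB (B : {set 'I_n}) : expo n := [ffun j => if j \in B then -1 else 0].
Definition ZB (B : {set 'I_n}) : {set gen n} := [set z : gen n | z.2 == (z.1 \notin B)].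
Definition sp B := SSpace (uB B) (ZB B).

Lemma monsetP B a : in_monset (sp B) a <-> (forall j, (a j < 0) = (j \in B)).
Proof.
split.
- move=> [c [Hs ->]] j; rewrite /exp_of ffunE /uB ffunE /=.
  case: (boolP (j \in B)) => jB.
  + have -> : c (j, true) = 0%N by apply: Hs; rewrite inE /= jB.
    lia.
  + have -> : c (j, false) = 0%N by apply: Hs; rewrite inE /= jB.
    lia.
- move=> H.
  exists (fun z : gen n => if z.2 then (if z.1 \in B then 0%N else absz (a z.1))
                          else (if z.1 \in B then (absz (a z.1)).-1 else 0%N)).
  split.
  + by case=> j [] /=; rewrite inE /=; case: (j \in B).
  + apply/ffunP=> j; rewrite /exp_of !ffunE /=.
    have := H j; case: (j \in B) => /= h; lia.
Qed.

Lemma cardZB (B : {set 'I_n}) : #|ZB B| = n.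
Proof.
have -> : ZB B = [set (j, j \notin B) | j : 'I_n].
  apply/setP=> -[j b]; rewrite inE /=; apply/eqP/imsetP => [->|[k _ [-> ->]]] //.
  by exists j.
by rewrite card_imset ?card_ord // => x y [].
Qed.

Lemma valid_sp (A B : {set 'I_n}) : B \subset A -> valid_space A (sp B).
Proof.
move=> sBA; split => /=.
- move=> j jA; rewrite /uB ffunE; case: ifP => // jB.
  by rewrite (subsetP sBA _ jB) in jA.
- by move=> j; rewrite inE /= eq_sym eqbF_neg negbK; apply: (subsetP sBA).
- by move=> j; rewrite !inE /=; case: (j \in B) => -[] /eqP.
- move=> c1 c2 H1 H2 E [j b].
  have /ffunP/(_ j) := E; rewrite /exp_of !ffunE => Ej.
  case: (boolP ((j, b) \in ZB B)) => hz; last by rewrite H1 ?H2.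
  move: hz; rewrite inE /= => /eqP hb.
  have h1 : c1 (j, ~~ b) = 0%N by apply: H1; rewrite inE /= hb; case: (j \in B).
  have h2 : c2 (j, ~~ b) = 0%N by apply: H2; rewrite inE /= hb; case: (j \in B).
  move: h1 h2 Ej; case: b hb => hb /= h1 h2 Ej; lia.
Qed.

Lemma big_minn_const (T : Type) (s : seq T) (F : T -> nat) :
  (forall x, F x = n) -> \big[minn/n]_(x <- s) F x = n.
Proof.
move=> H; elim: s => [|x s IH]; first by rewrite big_nil.
by rewrite big_cons IH H minnn.
Qed.
End S.

Local Open Scope ring_scope.
Theorem corollary2p3 (K : fieldType) (n : nat) (A : {set 'I_n}) :
  sdepth_Sf_is K A n.
Proof.
split; last first.
  move=> D _; rewrite /sdepth_decomp.
  elim: D => [|x s IH]; first by rewrite big_nil.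
  by rewrite big_cons geq_min IH orbT.
set e := enum (powerset A).
set D := map (@sp n) e.
exists D; split; last first.
  by rewrite /sdepth_decomp big_map; apply: big_minn_const => B; apply: cardZB.
have sD : size D = size e by rewrite size_map.
pose Bs (i : 'I_(size D)) := nth set0 e i.
have dsE i : dspace i = sp (Bs i).
  by rewrite /dspace (nth_map set0) // -sD.
have BsA i : Bs i \subset A.
  have : Bs i \in e by apply: mem_nth; rewrite -sD.
  by rewrite mem_enum inE.
have Bsinj i k : Bs i = Bs k -> i = k.
  move=> h; apply: val_inj => /=; apply/eqP.
  have u : uniq e by rewrite enum_uniq.
  by rewrite -(nth_uniq set0 _ _ u) -?sD //; apply/eqP.
have condE i k (a : expo n) : in_monset (sp (Bs i)) a -> in_monset (sp (Bs k)) a -> i = k.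
  move=> /monsetP h1 /monsetP h2; apply: Bsinj; apply/setP=> j.
  by rewrite -h1 -h2.
split.
- by move=> i; rewrite dsE; apply: valid_sp.
- move=> i q; rewrite dsE => -[fq hq]; split => // a /hq /monsetP h j jA.
  rewrite leNgt h; apply: contra jA; apply: (subsetP (BsA i)).
- move=> p [fp hp].
  pose g i (a : expo n) := if [forall j, (a j < 0)%R == (j \in Bs i)] then p a else 0%R.
  exists g; split.
    move=> i; rewrite dsE; split.
      case: fp => s hs; exists s => a; rewrite /g; case: ifP => _; [apply: hs | by rewrite eqxx].
    move=> a; rewrite /g; case: ifP => [/forallP h _|_]; last by rewrite eqxx.
    by apply/monsetP => j; apply/eqP/h.
  move=> a; case: (eqVneq (p a) 0) => pa0.
    by rewrite pa0 big1 // => i _; rewrite /g pa0; case: ifP.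
  pose Ba := [set j | a j < 0].
  have BaA : Ba \in e.
    rewrite mem_enum inE; apply/subsetP=> j; rewrite inE.
    apply: contraTT => jA; rewrite -leNgt; exact: (hp a pa0 j jA).
  have i0lt : (index Ba e < size D)%N by rewrite sD index_mem.
  pose i0 := Ordinal i0lt.
  have Bi0 : Bs i0 = Ba by rewrite /Bs /= nth_index.
  have mi0 : in_monset (sp (Bs i0)) a by apply/monsetP => j; rewrite Bi0 inE.
  rewrite (bigD1 i0) //= big1 ?addr0.
    rewrite /g; case: ifP => // /negbT/forallPn [j]; move/monsetP: mi0 => ->.
    by rewrite eqxx.
  move=> i ni; rewrite /g; case: ifP => // /forallP h.
  have {}h : in_monset (sp (Bs i)) a by apply/monsetP => j; apply/eqP/h.
  by rewrite (condE _ _ _ h mi0) eqxx in ni.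
- move=> g hg hs i a; apply/eqP; apply: contraT => ga.
  have mi : in_monset (sp (Bs i)) a.
    by have := hg i; rewrite dsE => -[_ h]; apply: h.
  have := hs a; rewrite (bigD1 i) //= big1 ?addr0; first by move/eqP; rewrite (negbTE ga).
  move=> k nk; apply/eqP; apply: contraT => gk.
  have mk : in_monset (sp (Bs k)) a.
    by have := hg k; rewrite dsE => -[_ h]; apply: h.
  by rewrite (condE _ _ _ mk mi) eqxx in nk.
Qed.
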